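(* Let $B_{m,n}\subset\operatorname{GL}(m\mathds{1}+nP)$ be the parabolic subgroup of block upper triangular matrices $\begin{pmatrix}F&C&C'\\0&D&D'\\0&E&D+E'\end{pmatrix}$. Identify $(\mathbb{G}'_a)^{mn}$ with $\operatorname{Mat}_{m\times n}(A)$. Then the multiplication map $(\mathbb{G}'_a)^{mn}\times B_{m,n}\to\operatorname{GL}(m\mathds{1}+nP)$, $B,(F,C,D,E)\mapsto\begin{pmatrix}I_m&0&0\\ B'&I_n&0\\ B&0&I_n\end{pmatrix}\begin{pmatrix}F&C&C'\\0&D&D'\\0&E&D+E'\end{pmatrix}$, is an isomorphism of schemes.
   Context: $\operatorname{Ver}_4^+$ is the category of $k[d]/d^2$-modules ($\operatorname{char}k=2$, $d$ primitive) with braiding $c(v\otimes w)=w\otimes v+dw\otimes dv$, and $x'=dx$. For a commutative algebra $A$ in $\operatorname{Ver}_4^+$, $\operatorname{GL}(m\mathds{1}+nP)(A)$ is the group of invertible matrices $\begin{pmatrix}F&C&C'\\ B'&D&D'\\ B&E&D+E'\end{pmatrix}$ under ordinary matrix multiplication. Here $F$ is an $m\times m$ matrix with $F'=0$, $D,E\in\operatorname{Mat}_{n\times n}(A)$, $C\in\operatorname{Mat}_{m\times n}(A)$ and $B\in\operatorname{Mat}_{n\times m}(A)$. Such a matrix is invertible iff $F$ and $D$ are invertible. $\mathbb{G}'_a$ is the group scheme $A\mapsto(A,+)$. *)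

(* Defs.v *)
From HB Require Import structures.
From mathcomp Require Import all_boot all_order all_algebra.
Set Implicit Arguments. Unset Strict Implicit. Unset Printing Implicit Defensive.
Import GRing.Theory.
Local Open Scope ring_scope.

(* A commutative algebra in Ver_4^+ (char k = 2): a k-algebra A with a
   k-linear operator d (the action of d, x' := d x) such that
   d^2 = 0, the unit is d-invariant, d is primitive (Leibniz rule on
   products, since d acts on A (x) A by d (x) 1 + 1 (x) d), and the
   multiplication is commutative w.r.t. the braiding
   c(v (x) w) = w (x) v + dw (x) dv, i.e. a b = b a + (d b)(d a). *)
Definition Ver4_comm_alg (k : fieldType) (A : algType k) (d : A -> A) : Prop :=
  [/\ forall (c : k) (a b : A), d (c *: a + b) = c *: d a + d b,
      forall a : A, d (d a) = 0,
      d 1 = 0,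
      forall a b : A, d (a * b) = d a * b + a * d b
    & forall a b : A, a * b = b * a + d b * d a].

Section GL.
Variables (k : fieldType) (A : algType k) (d : A -> A) (m n : nat).

Definition glmx (F : 'M[A]_m) (C : 'M[A]_(m, n)) (B : 'M[A]_(n, m))
  (D E : 'M[A]_n) : 'M[A]_(m + (n + n)) :=
  block_mx F (row_mx C (map_mx d C))
           (col_mx (map_mx d B) B)
           (block_mx D (map_mx d D) E (D + map_mx d E)).

Definition invertible_mx (M : 'M[A]_(m + (n + n))) : Prop :=
  exists N : 'M[A]_(m + (n + n)), M *m N = 1%:M /\ N *m M = 1%:M.

(* A-points of GL(m 1 + n P): invertible matrices of the above form with F' = 0. *)
Definition in_GL (M : 'M[A]_(m + (n + n))) : Prop :=
  (exists F C B D E, map_mx d F = 0 /\ M = glmx F C B D E) /\ invertible_mx M.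

Definition in_Bmn (M : 'M[A]_(m + (n + n))) : Prop :=
  (exists F C D E, map_mx d F = 0 /\ M = glmx F C 0 D E) /\ invertible_mx M.

Definition lowmx (B : 'M[A]_(n, m)) : 'M[A]_(m + (n + n)) :=
  block_mx 1%:M 0 (col_mx (map_mx d B) B) 1%:M.

End GL.

(* Main.v *)
Require Import Defs.
From HB Require Import structures.
From mathcomp Require Import all_boot all_order all_algebra.
From Stdlib Require Import ClassicalEpsilon.
Set Implicit Arguments. Unset Strict Implicit. Unset Printing Implicit Defensive.
Import GRing.Theory.
Local Open Scope ring_scope.
Local Open Scope quotient_scope.

Lemma Qblock (R : comPzRingType) m n (F : 'M[R]_m) (C : 'M[R]_(m, n)) (B : 'M[R]_(n, m))
  (D E : 'M[R]_n) (N : 'M[R]_(m + (n + n))) :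
  block_mx F (row_mx C 0) (col_mx 0 B) (block_mx D 0 E D) *m N = 1%:M ->
  exists q, \det F * q = 1.
Proof.
rewrite -[N]submxK; set a := ulsubmx N; set b := ursubmx N; set c := dlsubmx N; set e := drsubmx N.
rewrite -[c]vsubmxK -[e]submxK -[b]hsubmxK.
set c1 := usubmx c; set c2 := dsubmx c.
set e11 := ulsubmx e; set e12 := ursubmx e; set e21 := dlsubmx e; set e22 := drsubmx e.
rewrite mulmx_block mul_row_col mul_col_mx mul_block_col mul_col_row mulmx_block.
rewrite (scalar_mx_block m (n + n)) (scalar_mx_block n n) add_col_mx add_block_mx.
case/eq_block_mx => h1 _ h3 h4.
move: h3; rewrite -col_mx0 => /eq_col_mx [h3 _].
case/eq_block_mx: h4 => h4 _ _ _.
rewrite !mul0mx !add0r !addr0 in h3 h4.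
rewrite mul0mx addr0 in h1.
have dD : \det D * \det e11 = 1 by rewrite -det_mulmx h4 det1.
have c10 : c1 = 0.
  have : \adj D *m (D *m c1) = 0 by rewrite h3 mulmx0.
  rewrite mulmxA mul_adj_mx mul_scalar_mx => /(congr1 (fun X => \det e11 *: X)).
  by rewrite scaler0 scalerA mulrC dD scale1r.
rewrite c10 mulmx0 addr0 in h1.
by exists (\det a); rewrite -det_mulmx h1 det1.
Qed.

Section S.
Variables (k : fieldType) (A : algType k) (d : A -> A).
Hypothesis hA : Ver4_comm_alg d.

Lemma dD a b : d (a + b) = d a + d b.
Proof. by case: hA => h _ _ _ _; move: (h 1 a b); rewrite !scale1r. Qed.
Lemma d0 : d 0 = 0.
Proof. by apply: (addrI (d 0)); rewrite -dD !addr0. Qed.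
Lemma dN a : d (- a) = - d a.
Proof. by apply: (addrI (d a)); rewrite -dD !subrr d0. Qed.
Lemma dB a b : d (a - b) = d a - d b.
Proof. by rewrite dD dN. Qed.
Lemma dM a b : d (a * b) = d a * b + a * d b.
Proof. by case: hA. Qed.
Lemma d1 : d 1 = 0.
Proof. by case: hA. Qed.
Lemma dd a : d (d a) = 0.
Proof. by case: hA. Qed.
Lemma commA a b : a * b = b * a + d b * d a.
Proof. by case: hA. Qed.
Lemma dcentral x y : y * d x = d x * y.
Proof. by rewrite commA dd mul0r addr0. Qed.
Lemma kercentral x y : d x = 0 -> x * y = y * x.
Proof. by move=> h; rewrite commA h mulr0 addr0. Qed.
Lemma addKr' (a b : A) : - a + (a + b) = b. Proof. by rewrite addKr. Qed.
Lemma dsq x : d x * d x = 0.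
Proof. by apply: (addrI (x*x)); rewrite addr0 -commA. Qed.

Definition kerd : {pred A} := [pred x | d x == 0].
Lemma kerd_subring : subring_closed kerd.
Proof.
split; rewrite ?inE /kerd ?d1 //.
  by move=> x y; rewrite !inE /kerd dB => /eqP -> /eqP ->; rewrite subrr.
by move=> x y; rewrite !inE /kerd dM => /eqP -> /eqP ->; rewrite mulr0 mul0r addr0.
Qed.
HB.instance Definition _ := GRing.isSubringClosed.Build A kerd kerd_subring.
Record Z := MkZ { zval :> A; zP : zval \in kerd }.
HB.instance Definition _ := [isSub for zval].
HB.instance Definition _ := [Choice of Z by <:].
HB.instance Definition _ := GRing.SubChoice_isSubPzRing.Build A kerd Z kerd_subring.
Lemma Zcomm : commutative (@GRing.mul Z).
Proof. move=> x y; apply: val_inj => /=. apply: kercentral. by have := zP x; rewrite inE /kerd => /eqP. Qed.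
HB.instance Definition _ := GRing.PzRing_hasCommutativeMul.Build Z Zcomm.

Definition inN (x : A) : Prop := exists s : seq (A * A), x = \sum_(p <- s) d p.1 * p.2.
Lemma inN0 : inN 0. Proof. by exists [::]; rewrite big_nil. Qed.
Lemma inND x y : inN x -> inN y -> inN (x + y).
Proof. by move=> [s1 ->] [s2 ->]; exists (s1 ++ s2); rewrite big_cat. Qed.
Lemma inNN x : inN x -> inN (- x).
Proof.
move=> [s ->]; exists [seq (p.1, - p.2) | p <- s]; rewrite big_map -sumrN.
by apply: eq_bigr => p _; rewrite mulrN.
Qed.
Lemma inNB x y : inN x -> inN y -> inN (x - y).
Proof. by move=> hx hy; apply: inND => //; apply: inNN. Qed.
Lemma inNMl r x : inN x -> inN (r * x).
Proof.
move=> [s ->]; exists [seq (p.1, r * p.2) | p <- s]; rewrite big_map mulr_sumr.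
by apply: eq_bigr => p _; rewrite mulrA dcentral -mulrA.
Qed.
Lemma inNMr r x : inN x -> inN (x * r).
Proof.
move=> [s ->]; exists [seq (p.1, p.2 * r) | p <- s]; rewrite big_map mulr_suml.
by apply: eq_bigr => p _; rewrite mulrA.
Qed.
Lemma inN_d x : inN (d x).
Proof. by exists [:: (x, 1)]; rewrite big_seq1 mulr1. Qed.
Lemma inN_comm x y : inN (x * y - y * x).
Proof. by exists [:: (y, d x)]; rewrite big_seq1 /= [x * y]commA addrAC subrr add0r. Qed.

Lemma unit_step (c b u w : A) : (forall y, y * c = c * y) -> c * c = 0 ->
  u * w = 1 -> w * u = 1 ->
  (u - c * b) * (w + c * w * b * w) = 1 /\ (w + c * w * b * w) * (u - c * b) = 1.
Proof.
move=> cC cc h1 h2.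
have cyc : forall y, c * y * c = 0 by move=> y; rewrite -mulrA cC mulrA cc mul0r.
have e1 : u * (c * w * b * w) = c * b * w.
  by rewrite !mulrA cC -(mulrA c u w) h1 mulr1.
have e2 : c * b * (c * w * b * w) = 0.
  have -> : c * b * (c * w * b * w) = (c * b * c) * (w * b * w) by rewrite !mulrA.
  by rewrite cyc mul0r.
have e3 : c * w * b * w * u = c * w * b by rewrite -mulrA h2 mulr1.
have e4 : w * (c * b) = c * w * b by rewrite mulrA cC.
have e5 : c * w * b * w * (c * b) = 0.
  have -> : c * w * b * w * (c * b) = (c * (w * b * w) * c) * b by rewrite !mulrA.
  by rewrite cyc mul0r.
split.
  by rewrite mulrBl !mulrDr h1 e1 e2 addr0 addrK.
by rewrite mulrDl !mulrBr h2 e3 e4 e5 subr0 subrK.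
Qed.

Lemma inN_unit x : inN x -> exists w, (1 - x) * w = 1 /\ w * (1 - x) = 1.
Proof.
move=> [s ->]; elim: s => [|p s [w [h1 h2]]]; first by exists 1; rewrite big_nil subr0 mulr1.
rewrite big_cons opprD addrA addrAC.
exists (w + d p.1 * w * p.2 * w); apply: unit_step => //.
  by move=> y; apply: dcentral.
by apply: dsq.
Qed.

Definition Nb (x : A) : bool := if excluded_middle_informative (inN x) then true else false.
Lemma NbP x : reflect (inN x) (Nb x).
Proof. by rewrite /Nb; case: excluded_middle_informative => h; constructor. Qed.

Definition eqv (x y : A) := Nb (x - y).
Lemma eqv_is_equiv : equiv_class_of eqv.
Proof.
split=> [x|x y|y x z]; rewrite /eqv.
- by apply/NbP; rewrite subrr; apply: inN0.
- by apply/NbP/NbP => h; rewrite -opprB; apply: inNN.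
- move=> /NbP h1 /NbP h2; apply/NbP; have := inND h1 h2; by rewrite addrA subrK.
Qed.
Canonical eqv_equiv := EquivRelPack eqv_is_equiv.
Canonical eqv_encModRel := defaultEncModRel eqv.
Definition Q := {eq_quot eqv}.
HB.instance Definition _ : EqQuotient A eqv Q := EqQuotient.on Q.
HB.instance Definition _ := Choice.on Q.

Definition piQ (x : A) : Q := \pi_Q x.
Lemma piQP x y : piQ x = piQ y <-> inN (x - y).
Proof. by rewrite /piQ; split => [/(@eqquotP _ eqv Q)/NbP | /NbP/(@eqquotP _ eqv Q)]. Qed.
Lemma reprQ x : inN (repr (piQ x) - x).
Proof. by apply/piQP; rewrite /piQ reprK. Qed.
Lemma piQ_surj (u : Q) : u = piQ (repr u).
Proof. by rewrite /piQ reprK. Qed.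

Definition zeroQ : Q := piQ 0.
Definition oneQ : Q := piQ 1.
Definition addQ (u v : Q) : Q := piQ (repr u + repr v).
Definition oppQ (u : Q) : Q := piQ (- repr u).
Definition mulQ (u v : Q) : Q := piQ (repr u * repr v).

Lemma piQ_add x y : piQ (x + y) = addQ (piQ x) (piQ y).
Proof.
apply/piQP; rewrite opprD addrACA.
by have := inNN (inND (reprQ x) (reprQ y)); rewrite opprD !opprB.
Qed.
Lemma piQ_opp x : piQ (- x) = oppQ (piQ x).
Proof. by apply/piQP; rewrite opprK addrC; apply: reprQ. Qed.
Lemma piQ_mul x y : piQ (x * y) = mulQ (piQ x) (piQ y).
Proof.
apply/piQP; set rx := repr (piQ x); set ry := repr (piQ y).
have -> : x * y - rx * ry = - ((rx - x) * ry + x * (ry - y)).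
  by rewrite mulrBl mulrBr addrA subrK opprB.
apply: inNN; apply: inND; [apply: inNMr | apply: inNMl]; apply: reprQ.
Qed.

Lemma addQA : associative addQ.
Proof. by move=> u v w; rewrite (piQ_surj u) (piQ_surj v) (piQ_surj w) -!piQ_add addrA. Qed.
Lemma addQC : commutative addQ.
Proof. by move=> u v; rewrite (piQ_surj u) (piQ_surj v) -!piQ_add addrC. Qed.
Lemma add0Q : left_id zeroQ addQ.
Proof. by move=> u; rewrite (piQ_surj u) /zeroQ -!piQ_add add0r. Qed.
Lemma addNQ : left_inverse zeroQ oppQ addQ.
Proof. by move=> u; rewrite (piQ_surj u) -piQ_opp -piQ_add addNr. Qed.
HB.instance Definition _ := GRing.isZmodule.Build Q addQA addQC add0Q addNQ.
Lemma mulQA : associative mulQ.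
Proof. by move=> u v w; rewrite (piQ_surj u) (piQ_surj v) (piQ_surj w) -!piQ_mul mulrA. Qed.
Lemma mulQC : commutative mulQ.
Proof.
move=> u v; rewrite (piQ_surj u) (piQ_surj v) -!piQ_mul; apply/piQP; apply: inN_comm.
Qed.
Lemma mul1Q : left_id oneQ mulQ.
Proof. by move=> u; rewrite (piQ_surj u) /oneQ -!piQ_mul mul1r. Qed.
Lemma mulQDl : left_distributive mulQ addQ.
Proof.
move=> u v w; rewrite (piQ_surj u) (piQ_surj v) (piQ_surj w).
move: (repr u) (repr v) (repr w) => a b c.
rewrite -[addQ (piQ a) (piQ b)]piQ_add -[mulQ (piQ a) _]piQ_mul -[mulQ (piQ b) _]piQ_mul.
by rewrite -piQ_mul -piQ_add mulrDl.
Qed.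
HB.instance Definition _ := GRing.Zmodule_isComPzRing.Build Q mulQA mulQC mul1Q mulQDl.
Lemma piQ_zmod : zmod_morphism piQ.
Proof. by move=> x y; rewrite piQ_add piQ_opp. Qed.
HB.instance Definition _ := GRing.isZmodMorphism.Build A Q piQ piQ_zmod.
Lemma piQ_monoid : monoid_morphism piQ.
Proof. by split => // x y; rewrite piQ_mul. Qed.
HB.instance Definition _ := GRing.isMonoidMorphism.Build A Q piQ piQ_monoid.

Lemma d_zmod : zmod_morphism d. Proof. by move=> x y; rewrite dB. Qed.
HB.instance Definition _ := GRing.isZmodMorphism.Build A A d d_zmod.

Lemma piQ_d x : piQ (d x) = 0.
Proof. by rewrite -(rmorph0 piQ); apply/piQP; rewrite subr0; apply: inN_d. Qed.

Lemma map_piQ_d p q (X : 'M[A]_(p,q)) : map_mx piQ (map_mx d X) = 0.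
Proof. by apply/matrixP => i j; rewrite !mxE piQ_d. Qed.

Lemma liftZ p q (F : 'M[A]_(p,q)) : map_mx d F = 0 -> exists Fz : 'M[Z]_(p,q), F = map_mx val Fz.
Proof.
move=> h.
have hij : forall i j, F i j \in kerd.
  by move=> i j; rewrite inE; apply/eqP; have /matrixP/(_ i j) := h; rewrite !mxE.
by exists (\matrix_(i,j) MkZ (hij i j)); apply/matrixP => i j; rewrite !mxE.
Qed.

Lemma mx_scalar_r p q (X : 'M[A]_(p,q)) a : X *m a%:M = map_mx (fun x => x * a) X.
Proof.
apply/matrixP => i j; rewrite !mxE (bigD1 j) //= mxE eqxx mulr1n big1 ?addr0 // => l nlj.
by rewrite mxE (negbTE nlj) mulr0n mulr0.
Qed.

Lemma F_inv m n (F : 'M[A]_m) (C : 'M[A]_(m,n)) (B : 'M[A]_(n,m)) (D E : 'M[A]_n)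
  (N : 'M[A]_(m + (n + n))) :
  map_mx d F = 0 -> glmx d F C B D E *m N = 1%:M ->
  exists G, F *m G = 1%:M /\ G *m F = 1%:M.
Proof.
move=> hF hM.
have := congr1 (map_mx piQ) hM.
rewrite map_mxM map_mx1 /glmx !map_block_mx map_row_mx map_col_mx map_mxD !map_piQ_d addr0.
case/Qblock => q hq.
have [Fz eF] := liftZ hF.
subst F.
set δ := \det (map_mx val Fz).
have hδ : d δ = 0 by rewrite /δ det_map_mx; apply/eqP; exact: (zP (\det Fz)).
rewrite det_map_mx (piQ_surj q) -rmorphM -(rmorph1 piQ) in hq.
have /inN_unit [w [h1 h2]] : inN (1 - δ * repr q) by apply/piQP.
rewrite opprB addrC subrK in h1 h2.
set g := repr q * w.
have dg : δ * g = 1 by rewrite mulrA.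
have gd : g * δ = 1 by rewrite -(kercentral _ hδ).
have Fc : g%:M *m map_mx val Fz = map_mx val Fz *m g%:M.
  rewrite mul_scalar_mx mx_scalar_r; apply/matrixP => i j; rewrite !mxE; symmetry.
  by apply: kercentral; have /matrixP/(_ i j) := hF; rewrite !mxE.
exists (map_mx val (\adj Fz) *m g%:M); split.
  by rewrite mulmxA -map_mxM mul_mx_adj map_scalar_mx -det_map_mx -scalar_mxM dg.
by rewrite -mulmxA Fc mulmxA -map_mxM mul_adj_mx map_scalar_mx -det_map_mx -scalar_mxM dg.
Qed.

Lemma dmx_mul p q r (X : 'M[A]_(p,q)) (Y : 'M[A]_(q,r)) :
  map_mx d (X *m Y) = map_mx d X *m Y + X *m map_mx d Y.
Proof.
apply/matrixP => i j; rewrite !mxE raddf_sum -big_split /=.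
by apply: eq_bigr => l _; rewrite !mxE dM.
Qed.
Lemma dmx_dd p q (X : 'M[A]_(p,q)) : map_mx d (map_mx d X) = 0.
Proof. by apply/matrixP => i j; rewrite !mxE dd. Qed.

Hypothesis chk : (2 \in [pchar k])%N.
Lemma two0 (x : A) : x + x = 0.
Proof. by rewrite -mulr2n -scaler_nat (pcharf0 chk) scale0r. Qed.
Lemma two0mx p q (X : 'M[A]_(p,q)) : X + X = 0.
Proof. by apply/matrixP => i j; rewrite !mxE two0. Qed.

Lemma lowmx_glmx m n (X : 'M[A]_(n,m)) F C B (D E : 'M[A]_n) : map_mx d F = 0 ->
  lowmx d X *m glmx d F C B D E =
  glmx d F C (X *m F + B) (map_mx d X *m C + D) (X *m C + E).
Proof.
move=> hF; rewrite /lowmx /glmx mulmx_block !mul1mx !mul0mx !addr0 ?add0r.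
rewrite mul_col_mx add_col_mx mul_col_row add_block_mx.
have e1 : map_mx d (X *m F + B) = map_mx d X *m F + map_mx d B.
  by rewrite map_mxD dmx_mul hF mulmx0 addr0.
have e2 : map_mx d (map_mx d X *m C + D) = map_mx d X *m map_mx d C + map_mx d D.
  by rewrite map_mxD dmx_mul dmx_dd mul0mx add0r.
have e3 : map_mx d X *m C + D + map_mx d (X *m C + E) = X *m map_mx d C + (D + map_mx d E).
  rewrite map_mxD dmx_mul addrAC !addrA two0mx add0r.
  by rewrite addrAC.
by rewrite e1 e2 e3.
Qed.

Lemma lowmx_mul m n (X Y : 'M[A]_(n,m)) : lowmx d X *m lowmx d Y = lowmx d (X + Y).
Proof.
rewrite /lowmx mulmx_block !mul1mx !mul0mx !mulmx0 !mulmx1 !addr0 add0r.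
by rewrite add_col_mx map_mxD.
Qed.
Lemma lowmx0 m n : lowmx d (0 : 'M[A]_(n,m)) = 1%:M.
Proof. by rewrite /lowmx map_mx0 col_mx0 -scalar_mx_block. Qed.

Lemma glmx_inj m n (F F1 : 'M[A]_m) C C1 (B B1 : 'M[A]_(n,m)) (D D1 E E1 : 'M[A]_n) :
  glmx d F C B D E = glmx d F1 C1 B1 D1 E1 -> F = F1 /\ B = B1.
Proof. by case/eq_block_mx => -> _ /eq_col_mx [_ ->]. Qed.

Lemma main_sec m n :
  (forall (B : 'M[A]_(n, m)) (P : 'M[A]_(m + (n + n))),
      in_Bmn d P -> in_GL d (lowmx d B *m P)) /\
  (forall M : 'M[A]_(m + (n + n)), in_GL d M ->
      exists! BP : 'M[A]_(n, m) * 'M[A]_(m + (n + n)),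
        in_Bmn d BP.2 /\ M = lowmx d BP.1 *m BP.2).
Proof.
split.
  move=> B P [[F [C [D [E [hF ->]]]]] [N [h1 h2]]]; split.
    exists F, C, (B *m F + 0), (map_mx d B *m C + D), (B *m C + E); split => //.
    exact: lowmx_glmx.
  exists (N *m lowmx d (-B)); split.
    by rewrite -mulmxA (mulmxA _ N) h1 mul1mx lowmx_mul subrr lowmx0.
  by rewrite -mulmxA (mulmxA (lowmx d (-B))) lowmx_mul addNr lowmx0 mul1mx.
move=> M [[F [C [B [D [E [hF eM]]]]]] [N [h1 h2]]].
have [G [hG1 hG2]] : exists G, F *m G = 1%:M /\ G *m F = 1%:M.
  by apply: (F_inv hF (_ : glmx d F C B D E *m N = 1%:M)); rewrite -eM.
set B0 := B *m G.
exists (B0, lowmx d (-B0) *m M); split.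
  split; last by rewrite /= mulmxA lowmx_mul subrr lowmx0 mul1mx.
  split.
    exists F, C, (map_mx d (-B0) *m C + D), (-B0 *m C + E); split => //.
    rewrite /= eM lowmx_glmx // /B0 mulNmx -mulmxA hG2 mulmx1 addNr.
    by [].
  exists (N *m lowmx d B0); split.
    by rewrite /= -mulmxA (mulmxA _ N) h1 mul1mx lowmx_mul addNr lowmx0.
  by rewrite /= -mulmxA (mulmxA (lowmx d B0)) lowmx_mul subrr lowmx0 mul1mx.
move=> [B1 P1] /= [[[F1 [C1 [D1 [E1 [hF1 eP1]]]]] _] eM1].
have eB1 : B1 = B0.
  move: eM1; rewrite eP1 lowmx_glmx // eM => /glmx_inj [eF eB].
  by rewrite /B0 eB addr0 -eF -mulmxA hG1 mulmx1.
by rewrite eM1 eB1 mulmxA lowmx_mul addNr lowmx0 mul1mx.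
Qed.
End S.

Unset Implicit Arguments.
Set Strict Implicit.
Local Close Scope quotient_scope.

Theorem mainTheorem3 (k : fieldType) (chk : (2 \in [pchar k])%N)
  (A : algType k) (d : A -> A) (hA : Ver4_comm_alg d) (m n : nat) :
  (forall (B : 'M[A]_(n, m)) (P : 'M[A]_(m + (n + n))),
      in_Bmn d P -> in_GL d (lowmx d B *m P)) /\
  (forall M : 'M[A]_(m + (n + n)), in_GL d M ->
      exists! BP : 'M[A]_(n, m) * 'M[A]_(m + (n + n)),
        in_Bmn d BP.2 /\ M = lowmx d BP.1 *m BP.2).
Proof. exact: main_sec. Qed.
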